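(* Let $\bm X\in\mathbb{IR}^n$ and let $(g^{\rm u},g^{\rm o})_{\bm X}$ be a superposition relaxation of $g:\bm X\to\mathbb{R}$ on $\bm X$ with continuous summands $g^{\rm u}_i,g^{\rm o}_i:X_i\to\mathbb{R}$. Let $\mathcal P^{\rm u}=\{i:\operatorname{wid}(g^{\rm u}_i(X_i))>0\}$ and $\mathcal P^{\rm o}=\{i:\operatorname{wid}(g^{\rm o}_i(X_i))>0\}$, and assume both are nonempty. Let $\varphi:Z\to\mathbb{R}$ be defined on an interval $Z\supseteq[\underline g^{\rm u}(\bm X),\overline g^{\rm o}(\bm X)]$, convex and monotonic. Set $\theta^{\rm u}_i=\operatorname{wid}(g^{\rm u}_i(X_i))/\operatorname{wid}(g^{\rm u}(\bm X))$ and $\theta^{\rm o}_i=\operatorname{wid}(g^{\rm o}_i(X_i))/\operatorname{wid}(g^{\rm o}(\bm X))$. Then a superposition relaxation $(f^{\rm u},f^{\rm o})_{\bm X}$ of $f=\varphi\circ g$ on $\bm X$ is given by the following summands (all summands not listed being identically zero): • if $\varphi$ is nondecreasing: $f^{\rm u}_i(x_i)=\varphi\big(g^{\rm u}_i(x_i)-\underline g^{\rm u}_i(X_i)+\underline g^{\rm u}(\bm X)\big)-(1-\theta^{\rm u}_i)\varphi\big(\underline g^{\rm u}(\bm X)\big)$ for $i\in\mathcal P^{\rm u}$, and $f^{\rm o}_i(x_i)=\theta^{\rm o}_i\varphi\Big(\frac{g^{\rm o}_i(x_i)-\overline g^{\rm o}_i(X_i)}{\theta^{\rm o}_i}+\overline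 g^{\rm o}(\bm X)\Big)$ for $i\in\mathcal P^{\rm o}$; • if $\varphi$ is nonincreasing: $f^{\rm u}_i(x_i)=\varphi\big(g^{\rm o}_i(x_i)-\overline g^{\rm o}_i(X_i)+\overline g^{\rm o}(\bm X)\big)-(1-\theta^{\rm o}_i)\varphi\big(\overline g^{\rm o}(\bm X)\big)$ for $i\in\mathcal P^{\rm o}$, and $f^{\rm o}_i(x_i)=\theta^{\rm u}_i\varphi\Big(\frac{g^{\rm u}_i(x_i)-\underline g^{\rm u}_i(X_i)}{\theta^{\rm u}_i}+\underline g^{\rm u}(\bm X)\Big)$ for $i\in\mathcal P^{\rm u}$.
   Context: $\mathbb{IR}^n$ is the set of boxes $\bm X=X_1\times\cdots\times X_n$ of compact intervals $X_i$. A superposition relaxation of $g:\bm X\to\mathbb{R}$ on $\bm X$, written $(g^{\rm u},g^{\rm o})_{\bm X}$, is a pair of separable functions $g^{\rm u}(\bm x)=\sum_i g^{\rm u}_i(x_i)$, $g^{\rm o}(\bm x)=\sum_i g^{\rm o}_i(x_i)$ with $g^{\rm u}_i,g^{\rm o}_i:X_i\to\mathbb{R}$ and $g^{\rm u}\le g\le g^{\rm o}$ on $\bm X$. Notation: $\underline g^{\rm u}_i(X_i)=\min_{x_i\in X_i}g^{\rm u}_i(x_i)$, $\overline g^{\rm u}_i(X_i)=\max_{x_i\in X_i}g^{\rm u}_i(x_i)$, $\operatorname{wid}(g^{\rm u}_i(X_i))=\overline g^{\rm u}_i(X_i)-\underline g^{\rm u}_i(X_i)$ (similarly for $g^{\rm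 o}_i$); $\underline g^{\rm u}(\bm X)=\sum_i\underline g^{\rm u}_i(X_i)$, $\overline g^{\rm u}(\bm X)=\sum_i\overline g^{\rm u}_i(X_i)$, $\operatorname{wid}(g^{\rm u}(\bm X))=\overline g^{\rm u}(\bm X)-\underline g^{\rm u}(\bm X)$, and likewise for $g^{\rm o}$. *)

(* Defs.v *)
From HB Require Import structures.
From mathcomp Require Import all_boot all_order all_algebra.
From mathcomp Require Import all_classical all_reals all_analysis.
Set Implicit Arguments. Unset Strict Implicit. Unset Printing Implicit Defensive.
Import Order.TTheory GRing.Theory Num.Theory numFieldNormedType.Exports.
Local Open Scope classical_set_scope.
Local Open Scope ring_scope.

Section Defs.
Variables (R : realType) (n : nat).

Definition in_box (a b : 'I_n -> R) (x : 'I_n -> R) : Prop :=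
  forall i, a i <= x i <= b i.

(* minimum / maximum of h over the compact interval [lo, hi]
   (for continuous h these are attained, so inf = min and sup = max) *)
Definition fmin (h : R -> R) (lo hi : R) : R := inf (h @` `[lo, hi]).
Definition fmax (h : R -> R) (lo hi : R) : R := sup (h @` `[lo, hi]).
Definition fwid (h : R -> R) (lo hi : R) : R := fmax h lo hi - fmin h lo hi.

(* separable sums:  underline h(X), overline h(X), wid(h(X)) *)
Definition smin (a b : 'I_n -> R) (h : 'I_n -> R -> R) : R :=
  \sum_(i < n) fmin (h i) (a i) (b i).
Definition smax (a b : 'I_n -> R) (h : 'I_n -> R -> R) : R :=
  \sum_(i < n) fmax (h i) (a i) (b i).
Definition swid (a b : 'I_n -> R) (h : 'I_n -> R -> R) : R :=
  smax a b h - smin a b h.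

Definition superposition_relaxation (a b : 'I_n -> R)
    (f : ('I_n -> R) -> R) (hu ho : 'I_n -> R -> R) : Prop :=
  forall x, in_box a b x ->
    \sum_(i < n) hu i (x i) <= f x /\ f x <= \sum_(i < n) ho i (x i).

End Defs.

Definition convex_on (R : realType) (Z : set R) (phi : R -> R) : Prop :=
  forall x y t, Z x -> Z y -> 0 <= t <= 1 ->
    phi (t * x + (1 - t) * y) <= t * phi x + (1 - t) * phi y.

(* Main.v *)
Require Import Defs.
From HB Require Import structures.
From mathcomp Require Import all_boot all_order all_algebra.
From mathcomp Require Import all_classical all_reals all_analysis.
From mathcomp Require Import ring lra.
Import Order.TTheory GRing.Theory Num.Theory numFieldNormedType.Exports.
Local Open Scope classical_set_scope.
Local Open Scope ring_scope.

Lemma convZ (R : realType) (Z : set R) x y t : is_interval Z -> Z x -> Z y ->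
  0 <= t <= 1 -> Z (t * x + (1 - t) * y).
Proof.
move=> iZ Zx Zy /andP[t0 t1].
have h1 : 0 <= 1 - t by lra.
case: (leP x y) => [xy|yx].
  have h2 : 0 <= (1 - t) * (y - x) by apply: mulr_ge0; lra.
  have h3 : 0 <= t * (y - x) by apply: mulr_ge0; lra.
  by apply: (iZ x y) => //; apply/andP; split; lra.
have h2 : 0 <= (1 - t) * (x - y) by apply: mulr_ge0; lra.
have h3 : 0 <= t * (x - y) by apply: mulr_ge0; lra.
by apply: (iZ y x) => //; apply/andP; split; lra.
Qed.

Lemma sum0w (R : realType) (I : Type) (s : seq I) (w f : I -> R) :
  (forall i, 0 <= w i) -> \sum_(i <- s) w i = 0 -> \sum_(i <- s) w i * f i = 0.
Proof.
move=> w0; elim: s => [|x s IH]; first by rewrite !big_nil.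
rewrite !big_cons => H.
have s0 : 0 <= \sum_(i <- s) w i by apply: sumr_ge0.
have wx0 : w x = 0 by have := w0 x; lra.
rewrite IH; last by lra.
by rewrite wx0 mul0r addr0.
Qed.

Lemma jensen (R : realType) (Z : set R) (phi : R -> R) (I : Type) (s : seq I)
  (w p : I -> R) : is_interval Z -> convex_on Z phi ->
  (forall i, 0 <= w i) -> (forall i, Z (p i)) -> 0 < \sum_(i <- s) w i ->
  Z ((\sum_(i <- s) w i * p i) / \sum_(i <- s) w i) /\
  phi ((\sum_(i <- s) w i * p i) / \sum_(i <- s) w i)
    <= (\sum_(i <- s) w i * phi (p i)) / \sum_(i <- s) w i.
Proof.
move=> iZ cZ w0 Zp; elim: s => [|x s IH]; first by rewrite big_nil ltxx.
rewrite !big_cons.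
set c := \sum_(i <- s) w i; set A := \sum_(i <- s) w i * p i;
set B := \sum_(i <- s) w i * phi (p i) => cpos.
have c0 : 0 <= c by apply: sumr_ge0.
have wx0 := w0 x.
have [ce|cne] := eqVneq c 0.
  have A0 : A = 0 by apply: sum0w.
  have B0 : B = 0 by apply: sum0w.
  rewrite A0 B0 ce !addr0 in cpos *.
  have wxn : w x != 0 by rewrite gt_eqF.
  by rewrite [w x * p x]mulrC [w x * phi _]mulrC !mulfK //; split.
have cp : 0 < c by rewrite lt_neqAle eq_sym cne.
have [Zq phq] := IH cp.
set q := A / c in Zq phq.
set t := w x / (w x + c).
have cn : w x + c != 0 by rewrite gt_eqF.
have t01 : 0 <= t <= 1.
  apply/andP; split; first by rewrite divr_ge0 // addr_ge0.
  by rewrite ler_pdivrMr ?mul1r ?lerDl // ltr_wpDl.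
have E1 : (w x * p x + A) / (w x + c) = t * p x + (1 - t) * q.
  by rewrite /t /q; field; apply/andP.
have E2 : (w x * phi (p x) + B) / (w x + c) = t * phi (p x) + (1 - t) * (B / c).
  by rewrite /t; field; apply/andP.
rewrite E1 E2; split; first exact: convZ.
apply: le_trans (cZ _ _ _ (Zp x) Zq t01) _.
rewrite lerD2l ler_wpM2l //.
by case/andP: t01 => _ t1; rewrite subr_ge0.
Qed.
Lemma le_sum_one (R : realType) (n : nat) (y : 'I_n -> R) j :
  (forall i, 0 <= y i) -> y j <= \sum_i y i.
Proof.
move=> y0; rewrite (bigD1 j) //= lerDl; exact: sumr_ge0.
Qed.

Lemma superadd (R : realType) (n : nat) (P : 'I_n -> bool) (th y : 'I_n -> R)
  (k : R -> R) (S : R) (F : 'I_n -> R) (K0 : R) :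
  (forall i, 0 <= y i) -> \sum_i y i = S ->
  (forall i, ~~ P i -> y i = 0 /\ th i = 0) -> \sum_i th i = 1 ->
  (forall i, F i = k (y i)) -> k 0 = K0 ->
  (forall t, 0 <= t <= 1 -> k (t * S) <= t * k S + (1 - t) * k 0) ->
  \sum_i (if P i then F i - (1 - th i) * K0 else 0) <= k S.
Proof.
move=> y0 yS Pn th1 hF hK kc.
have -> : \sum_i (if P i then F i - (1 - th i) * K0 else 0) =
  \sum_i (if P i then k (y i) - (1 - th i) * k 0 else 0).
  by apply: eq_bigr => i _; rewrite hF hK.
have yle i : y i <= S by rewrite -yS; exact: le_sum_one.
have S0 : 0 <= S by rewrite -yS; exact: sumr_ge0.
apply: (@le_trans _ _ (\sum_i (y i * (S^-1 * (k S - k 0)) + th i * k 0))).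
  apply: ler_sum => i _.
  case: (boolP (P i)) => Pi; last first.
    by have [-> ->] := Pn i Pi; rewrite !mul0r addr0.
  have [Se|Sn] := eqVneq S 0.
    have yi0 : y i = 0 by apply/le_anti; rewrite y0 -Se yle.
    rewrite yi0 mul0r add0r; lra.
  have Sp : 0 < S by rewrite lt_neqAle eq_sym Sn.
  have t01 : 0 <= y i / S <= 1.
    by rewrite divr_ge0 ?y0 // ler_pdivrMr // mul1r yle.
  have := kc _ t01; rewrite mulfVK //.
  have -> : y i * (S^-1 * (k S - k 0)) = y i / S * (k S - k 0) by rewrite mulrA.
  lra.
rewrite big_split /= -!mulr_suml yS th1 mul1r.
have [->|Sn] := eqVneq S 0; first by rewrite mul0r add0r.
rewrite mulrA mulfV // mul1r; lra.
Qed.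
Lemma upper_gen (R : realType) (n : nat) (Z : set R) (phi : R -> R)
  (P : 'I_n -> bool) (th d : 'I_n -> R) (C : R) :
  is_interval Z -> convex_on Z phi ->
  (forall i, 0 <= th i) -> \sum_i th i = 1 ->
  (forall i, ~~ P i -> d i = 0 /\ th i = 0) -> (forall i, P i -> 0 < th i) ->
  (forall i, Z (d i / th i + C)) ->
  phi (\sum_i d i + C) <= \sum_i (if P i then th i * phi (d i / th i + C) else 0).
Proof.
move=> iZ cZ th0 th1 Pn Pp Zp.
have -> : \sum_i (if P i then th i * phi (d i / th i + C) else 0) =
  \sum_i th i * phi (d i / th i + C).
  apply: eq_bigr => i _; case: (boolP (P i)) => // Pi.
  by have [_ ->] := Pn i Pi; rewrite mul0r.
have -> : \sum_i d i + C = \sum_i th i * (d i / th i + C).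
  have -> : \sum_i th i * (d i / th i + C) = \sum_i (d i + th i * C).
    apply: eq_bigr => i _; rewrite mulrDr; congr (_ + _).
    have [t0|tn] := eqVneq (th i) 0.
      case: (boolP (P i)) => Pi; first by have := Pp i Pi; rewrite t0 ltxx.
      by have [-> _] := Pn i Pi; rewrite t0 mul0r.
    by rewrite mulrC mulfVK.
  by rewrite big_split /= -mulr_suml th1 mul1r.
have th1' : 0 < \sum_i th i by rewrite th1 ltr01.
have [_ J] := @jensen R Z phi _ (index_enum 'I_n) th (fun i => d i / th i + C) iZ cZ th0 Zp th1'.
by move: J; rewrite th1 !divr1.
Qed.
Lemma attain (R : realType) (h : R -> R) (lo hi : R) : lo <= hi ->
  {within (`[lo, hi] : set R), continuous h} ->
  (forall t, lo <= t <= hi -> fmin h lo hi <= h t <= fmax h lo hi) /\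
  (exists2 c, lo <= c <= hi & h c = fmin h lo hi) /\
  (exists2 c, lo <= c <= hi & h c = fmax h lo hi).
Proof.
move=> lohi hc.
have [cM cMin maxf] := EVT_max lohi hc.
have [cm cmin minf] := EVT_min lohi hc.
rewrite in_itv /= in cMin cmin.
have ne : h @` `[lo, hi] !=set0 by exists (h lo), lo => //=; rewrite in_itv /= lexx lohi.
have ub : ubound (h @` `[lo, hi]) (h cM).
  by move=> _ [t tin <-]; apply: maxf; rewrite inE.
have lb : lbound (h @` `[lo, hi]) (h cm).
  by move=> _ [t tin <-]; apply: minf; rewrite inE.
have EM : fmax h lo hi = h cM.
  apply/le_anti; rewrite ge_sup //=.
  by apply: ub_le_sup; [exists (h cM) | exists cM => //; rewrite in_itv /= cMin].
have Em : fmin h lo hi = h cm.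
  apply/le_anti; rewrite lb_le_inf // andbT.
  by apply: ge_inf; [exists (h cm) | exists cm => //; rewrite in_itv /= cmin].
rewrite EM Em; split; last by split; [exists cm | exists cM].
by move=> t tin; rewrite minf ?maxf // in_itv /= tin.
Qed.

Theorem theorem1 (R : realType) (n : nat) (a b : 'I_n -> R)
  (g : ('I_n -> R) -> R) (gu go : 'I_n -> R -> R)
  (Z : set R) (phi : R -> R) :
  (forall i, a i <= b i) ->
  superposition_relaxation a b g gu go ->
  (forall i, {within (`[a i, b i] : set R), continuous (gu i : R -> R)}) ->
  (forall i, {within (`[a i, b i] : set R), continuous (go i : R -> R)}) ->
  (exists i, 0 < fwid (gu i) (a i) (b i)) ->
  (exists i, 0 < fwid (go i) (a i) (b i)) ->
  is_interval Z ->
  `[smin a b gu, smax a b go] `<=` Z ->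
  convex_on Z phi ->
  let thu i := fwid (gu i) (a i) (b i) / swid a b gu in
  let tho i := fwid (go i) (a i) (b i) / swid a b go in
  (* phi nondecreasing *)
  ({in Z &, forall x y, x <= y -> phi x <= phi y} ->
    superposition_relaxation a b (fun x => phi (g x))
      (fun i xi => if 0 < fwid (gu i) (a i) (b i) then
          phi (gu i xi - fmin (gu i) (a i) (b i) + smin a b gu)
          - (1 - thu i) * phi (smin a b gu)
        else 0)
      (fun i xi => if 0 < fwid (go i) (a i) (b i) then
          tho i * phi ((go i xi - fmax (go i) (a i) (b i)) / tho i
                       + smax a b go)
        else 0))
  /\
  (* phi nonincreasing *)
  ({in Z &, forall x y, x <= y -> phi y <= phi x} ->
    superposition_relaxation a b (fun x => phi (g x))
      (fun i xi => if 0 < fwid (go i) (a i) (b i) then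
          phi (go i xi - fmax (go i) (a i) (b i) + smax a b go)
          - (1 - tho i) * phi (smax a b go)
        else 0)
      (fun i xi => if 0 < fwid (gu i) (a i) (b i) then
          thu i * phi ((gu i xi - fmin (gu i) (a i) (b i)) / thu i
                       + smin a b gu)
        else 0)).
Proof.
move=> ab rel cu co [iu wu] [io wo] iZ sub cZ thu tho.
have Au i := @attain R (gu i) _ _ (ab i) (cu i).
have Ao i := @attain R (go i) _ _ (ab i) (co i).
have bu x : in_box a b x -> forall i,
    fmin (gu i) (a i) (b i) <= gu i (x i) <= fmax (gu i) (a i) (b i).
  by move=> hx i; apply: (Au i).1; exact: hx.
have bo x : in_box a b x -> forall i,
    fmin (go i) (a i) (b i) <= go i (x i) <= fmax (go i) (a i) (b i).
  by move=> hx i; apply: (Ao i).1; exact: hx.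
have aa : in_box a b a by move=> i; rewrite lexx ab.
have wu0 i : 0 <= fwid (gu i) (a i) (b i).
  by have /andP[h1 h2] := bu a aa i; rewrite /fwid subr_ge0 (le_trans h1 h2).
have wo0 i : 0 <= fwid (go i) (a i) (b i).
  by have /andP[h1 h2] := bo a aa i; rewrite /fwid subr_ge0 (le_trans h1 h2).
have swu : swid a b gu = \sum_i fwid (gu i) (a i) (b i) by rewrite /swid sumrB.
have swo : swid a b go = \sum_i fwid (go i) (a i) (b i) by rewrite /swid sumrB.
have Wu : 0 < swid a b gu.
  rewrite swu (bigD1 iu) //=; apply: (lt_le_trans wu); rewrite lerDl.
  by apply: sumr_ge0 => *; exact: wu0.
have Wo : 0 < swid a b go.
  rewrite swo (bigD1 io) //=; apply: (lt_le_trans wo); rewrite lerDl.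
  by apply: sumr_ge0 => *; exact: wo0.
have thu1 : \sum_i thu i = 1 by rewrite /thu -mulr_suml -swu divff // gt_eqF.
have tho1 : \sum_i tho i = 1 by rewrite /tho -mulr_suml -swo divff // gt_eqF.
have thu0 i : 0 <= thu i by rewrite /thu divr_ge0 // ltW.
have tho0 i : 0 <= tho i by rewrite /tho divr_ge0 // ltW.
have thup i : 0 < fwid (gu i) (a i) (b i) -> 0 < thu i by move=> h; rewrite /thu divr_gt0.
have thop i : 0 < fwid (go i) (a i) (b i) -> 0 < tho i by move=> h; rewrite /tho divr_gt0.
have Pnu i : ~~ (0 < fwid (gu i) (a i) (b i)) ->
    fmax (gu i) (a i) (b i) = fmin (gu i) (a i) (b i) /\ thu i = 0.
  move=> h; have w0 : fwid (gu i) (a i) (b i) = 0.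
    by apply/le_anti; rewrite wu0 andbT leNgt.
  by split; [move: w0; rewrite /fwid => /eqP; rewrite subr_eq0 => /eqP | rewrite /thu w0 mul0r].
have Pno i : ~~ (0 < fwid (go i) (a i) (b i)) ->
    fmax (go i) (a i) (b i) = fmin (go i) (a i) (b i) /\ tho i = 0.
  move=> h; have w0 : fwid (go i) (a i) (b i) = 0.
    by apply/le_anti; rewrite wo0 andbT leNgt.
  by split; [move: w0; rewrite /fwid => /eqP; rewrite subr_eq0 => /eqP | rewrite /tho w0 mul0r].
have LU : smax a b gu <= smax a b go.
  have : forall i, exists c, (a i <= c <= b i) /\ gu i c = fmax (gu i) (a i) (b i).
    by move=> i; have [_ [_ [c h1 h2]]] := Au i; exists c.
  move=> /choice [xs hxs].
  have bx : in_box a b xs by move=> i; exact: (hxs i).1.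
  have [h1 h2] := rel xs bx.
  apply: (@le_trans _ _ (\sum_i go i (xs i))); last first.
    by apply: ler_sum => i _; have /andP[] := bo xs bx i.
  rewrite /smax (eq_bigr (fun i => gu i (xs i))); last by move=> i _; rewrite (hxs i).2.
  exact: le_trans h1 h2.
have LL : smin a b gu <= smin a b go.
  have : forall i, exists c, (a i <= c <= b i) /\ go i c = fmin (go i) (a i) (b i).
    by move=> i; have [_ [[c h1 h2] _]] := Ao i; exists c.
  move=> /choice [xs hxs].
  have bx : in_box a b xs by move=> i; exact: (hxs i).1.
  have [h1 h2] := rel xs bx.
  apply: (@le_trans _ _ (\sum_i gu i (xs i))).
    by apply: ler_sum => i _; have /andP[] := bu xs bx i.
  rewrite /smin [X in _ <= X](eq_bigr (fun i => go i (xs i))); last by move=> i _; rewrite (hxs i).2.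
  exact: le_trans h1 h2.
have ZI z : smin a b gu <= z <= smax a b go -> Z z.
  by move=> h; apply: sub; rewrite /= in_itv /= h.
have sgu x : in_box a b x -> smin a b gu <= \sum_i gu i (x i) <= smax a b gu.
  move=> hx; apply/andP; split; apply: ler_sum => i _; by have /andP[] := bu x hx i.
have sgo x : in_box a b x -> smin a b go <= \sum_i go i (x i) <= smax a b go.
  move=> hx; apply/andP; split; apply: ler_sum => i _; by have /andP[] := bo x hx i.
have smu : smin a b gu <= smax a b gu by have /andP[h1 h2] := sgu a aa; exact: le_trans h1 h2.
have smo : smin a b go <= smax a b go by have /andP[h1 h2] := sgo a aa; exact: le_trans h1 h2.

split => [mono|anti] x hx; have [h1 h2] := rel x hx;
  have /andP[su1 su2] := sgu x hx; have /andP[so1 so2] := sgo x hx.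
- have Zg : Z (g x) by apply: ZI; rewrite (le_trans su1 h1) (le_trans h2 so2).
  have Zsu : Z (\sum_i gu i (x i)) by apply: ZI; rewrite su1 (le_trans su2 LU).
  have Zso : Z (\sum_i go i (x i)) by apply: ZI; rewrite so2 (le_trans LL so1).
  split.
  + apply: le_trans (@superadd R n (fun i => 0 < fwid (gu i) (a i) (b i)) thu
      (fun i => gu i (x i) - fmin (gu i) (a i) (b i))
      (fun z => phi (z + smin a b gu)) (\sum_i gu i (x i) - smin a b gu)
      (fun i => phi (gu i (x i) - fmin (gu i) (a i) (b i) + smin a b gu))
      (phi (smin a b gu)) _ _ _ thu1 _ _ _) _.
    * by move=> i; rewrite subr_ge0; have /andP[] := bu x hx i.
    * by rewrite sumrB.
    * move=> i /Pnu [e ->]; split=> //; have := bu x hx i; rewrite e => /andP[p q].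
      by apply/eqP; rewrite subr_eq0 eq_le p q.
    * by [].
    * by rewrite /= add0r.
    * move=> t t01 /=; rewrite subrK add0r.
      have -> : forall s L : R, t * (s - L) + L = t * s + (1 - t) * L by move=> *; ring.
      apply: cZ => //; apply: ZI; by rewrite lexx (le_trans smu LU).
    * rewrite /= subrK; apply: mono => //; exact: mem_set.
  + apply: (@le_trans _ _ (phi (\sum_i go i (x i)))).
      by apply: mono => //; exact: mem_set.
    have -> : \sum_i go i (x i) = \sum_i (go i (x i) - fmax (go i) (a i) (b i)) + smax a b go
      by rewrite sumrB subrK.
    apply: (@upper_gen R n Z phi (fun i => 0 < fwid (go i) (a i) (b i)) tho
      (fun i => go i (x i) - fmax (go i) (a i) (b i)) (smax a b go) iZ cZ tho0 tho1 _ _ _).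
    * move=> i /Pno [e ->]; split=> //; have := bo x hx i; rewrite e => /andP[p q].
      by apply/eqP; rewrite subr_eq0 eq_le q p.
    * exact: thop.
    * move=> i; case: (boolP (0 < fwid (go i) (a i) (b i))) => Pi; last first.
        have [e t0] := Pno i Pi; rewrite t0 invr0 mulr0 add0r; apply: ZI.
        by rewrite lexx (le_trans LL smo).
      have tp := thop i Pi.
      have /andP[p q] := bo x hx i.
      have q1 : (go i (x i) - fmax (go i) (a i) (b i)) / tho i <= 0.
        by apply: mulr_le0_ge0; [rewrite subr_le0 | rewrite invr_ge0 ltW].
      have q2 : - swid a b go <= (go i (x i) - fmax (go i) (a i) (b i)) / tho i.
        rewrite ler_pdivlMr // mulNr /tho mulrCA mulfV ?gt_eqF // mulr1 /fwid.
        lra.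
      have Sdef : swid a b go = smax a b go - smin a b go by [].
      apply: ZI; apply/andP; split; lra.
- have Zg : Z (g x) by apply: ZI; rewrite (le_trans su1 h1) (le_trans h2 so2).
  have Zsu : Z (\sum_i gu i (x i)) by apply: ZI; rewrite su1 (le_trans su2 LU).
  have Zso : Z (\sum_i go i (x i)) by apply: ZI; rewrite so2 (le_trans LL so1).
  have ZU : Z (smax a b go) by apply: ZI; rewrite lexx (le_trans LL smo).
  split.
  + apply: le_trans (@superadd R n (fun i => 0 < fwid (go i) (a i) (b i)) tho
      (fun i => fmax (go i) (a i) (b i) - go i (x i))
      (fun z => phi (- z + smax a b go)) (smax a b go - \sum_i go i (x i))
      (fun i => phi (go i (x i) - fmax (go i) (a i) (b i) + smax a b go))
      (phi (smax a b go)) _ _ _ tho1 _ _ _) _.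
    * by move=> i; rewrite subr_ge0; have /andP[] := bo x hx i.
    * by rewrite sumrB.
    * move=> i /Pno [e ->]; split=> //; have := bo x hx i; rewrite e => /andP[p q].
      by apply/eqP; rewrite subr_eq0 eq_le q p.
    * by move=> i /=; rewrite opprB.
    * by rewrite /= oppr0 add0r.
    * move=> t t01 /=; rewrite oppr0 add0r.
      have -> : forall s U : R, - (t * (U - s)) + U = t * (- (U - s) + U) + (1 - t) * U
        by move=> *; ring.
      by apply: cZ => //; rewrite opprB subrK.
    * rewrite /= opprB subrK; apply: anti => //; exact: mem_set.
  + apply: (@le_trans _ _ (phi (\sum_i gu i (x i)))).
      by apply: anti => //; exact: mem_set.
    have -> : \sum_i gu i (x i) = \sum_i (gu i (x i) - fmin (gu i) (a i) (b i)) + smin a b gu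
      by rewrite sumrB subrK.
    apply: (@upper_gen R n Z phi (fun i => 0 < fwid (gu i) (a i) (b i)) thu
      (fun i => gu i (x i) - fmin (gu i) (a i) (b i)) (smin a b gu) iZ cZ thu0 thu1 _ _ _).
    * move=> i /Pnu [e ->]; split=> //; have := bu x hx i; rewrite e => /andP[p q].
      by apply/eqP; rewrite subr_eq0 eq_le p q.
    * exact: thup.
    * move=> i; case: (boolP (0 < fwid (gu i) (a i) (b i))) => Pi; last first.
        have [e t0] := Pnu i Pi; rewrite t0 invr0 mulr0 add0r; apply: ZI.
        by rewrite lexx (le_trans smu LU).
      have tp := thup i Pi.
      have /andP[p q] := bu x hx i.
      have q1 : 0 <= (gu i (x i) - fmin (gu i) (a i) (b i)) / thu i.
        by apply: divr_ge0; [rewrite subr_ge0 | rewrite ltW].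
      have q2 : (gu i (x i) - fmin (gu i) (a i) (b i)) / thu i <= swid a b gu.
        rewrite ler_pdivrMr // /thu mulrCA mulfV ?gt_eqF // mulr1 /fwid.
        lra.
      have Sdef : swid a b gu = smax a b gu - smin a b gu by [].
      apply: ZI; apply/andP; split; lra.
Qed.
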